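(* Let $n \geq 1$, let $\mathbb{K}$ be a field and $S=\mathbb{K}[x_1,\dots,x_n]$. Let $M_n^{(1)} \subset S$ be the ideal \[M_n^{(1)}=\langle x_i^{\,n} : 1\le i\le n\rangle+\langle x_i^{\,n-1}x_j^{\,n-1} : 1\le i<j\le n\rangle .\] Then the number of standard monomials of $M_n^{(1)}$ (monomials of $S$ divisible by no generator), equivalently $\dim_{\mathbb{K}} S/M_n^{(1)}$, equals \[(2n-1)(n-1)^{n-1}\] (with the convention $0^0=1$).
   Context: The ideal $M_n^{(1)}$ is the $1$-skeleton ideal of the complete graph $K_{n+1}$ on vertex set $\{0,1,\dots,n\}$ with sink $0$: for a graph $G$ on $\{0,1,\dots,n\}$ and nonempty $\sigma\subseteq[n]=\{1,\dots,n\}$ one sets $m_\sigma=\prod_{i\in\sigma}x_i^{\mathrm{outdeg}_\sigma(i)}$, where $\mathrm{outdeg}_\sigma(i)$ is the number of vertices of $G$ not in $\sigma$ adjacent to $i$, and $M_G^{(1)}=\langle m_\sigma : \emptyset\ne\sigma\subseteq[n],\ |\sigma|\le 2\rangle$. For $G=K_{n+1}$ this gives the generators displayed in the claim. *)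

(* Defs.v *)
(* Monomials of K[x_1..x_n] are represented by exponent
   vectors e : {ffun 'I_n -> nat} (variable x_(i+1) <-> index i : 'I_n). *)
From mathcomp Require Import all_boot.
Set Implicit Arguments. Unset Strict Implicit. Unset Printing Implicit Defensive.

Definition monomial (n : nat) := {ffun 'I_n -> nat}.

Definition mdivides n (a b : monomial n) : bool := [forall i, a i <= b i].

Definition pure_power n (i : 'I_n) : monomial n :=
  [ffun k => if k == i then n else 0].

Definition pair_power n (i j : 'I_n) : monomial n :=
  [ffun k => if (k == i) || (k == j) then n.-1 else 0].

Definition M1_gens n : seq (monomial n) :=
  [seq pure_power i | i : 'I_n <- enum 'I_n] ++
  [seq pair_power i j | i : 'I_n <- enum 'I_n, j : 'I_n <- filter (fun j : 'I_n => (i < j)%N) (enum 'I_n)].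

Definition standard_M1 n (e : monomial n) : bool :=
  ~~ has (fun g => mdivides g e) (M1_gens n).

(* Main.v *)
Require Import Defs.
From mathcomp Require Import all_boot zify.
Set Implicit Arguments. Unset Strict Implicit. Unset Printing Implicit Defensive.

Section S.
Variable n' : nat.
Local Notation n := n'.+1.

Lemma pure_div (i : 'I_n) (e : monomial n) :
  mdivides (pure_power i) e = (n <= e i).
Proof.
apply/forallP/idP => [H|H k]; first by move: (H i); rewrite ffunE eqxx.
by rewrite ffunE; case: eqP => [->|].
Qed.

Lemma pair_div (i j : 'I_n) (e : monomial n) :
  mdivides (pair_power i j) e = (n' <= e i) && (n' <= e j).
Proof.
apply/forallP/andP => [H|[H1 H2] k].
  by move: (H i) (H j); rewrite !ffunE !eqxx /= orbT.
by rewrite ffunE; case: eqP => [->|] //= _; case: eqP => [->|].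
Qed.

Lemma stdE (e : monomial n) : standard_M1 e =
  [forall i : 'I_n, e i <= n'] &&
  [forall i : 'I_n, forall j : 'I_n, (i < j) ==> ~~ ((n' <= e i) && (n' <= e j))].
Proof.
rewrite /standard_M1 /M1_gens has_cat negb_or has_map; congr andb.
  apply/hasPn/forallP => [H i|H i _] /=.
    by have := H i (mem_enum _ i); rewrite /= pure_div -ltnNge ltnS.
  by rewrite /= pure_div -ltnNge ltnS.
apply/hasPn/forallP => [H i|H z /allpairsPdep [i [j [_ Hj ->]]]].
  apply/forallP => j; apply/implyP => lij.
  have := H (pair_power i j); rewrite pair_div; apply.
  by apply/allpairsPdep; exists i, j; rewrite mem_enum mem_filter mem_enum lij.
move: Hj; rewrite mem_filter => /andP [lij _].
by rewrite pair_div; move/forallP: (H i) => /(_ j); rewrite lij.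
Qed.

Definition g (f : {ffun 'I_n -> 'I_n}) : monomial n := [ffun i => nat_of_ord (f i)].

Definition Q (f : {ffun 'I_n -> 'I_n}) :=
  [forall i : 'I_n, forall j : 'I_n, (i < j) ==> ~~ ((f i == ord_max) && (f j == ord_max))].

Lemma maxE (x : 'I_n) : (n' <= x) = (x == ord_max).
Proof.
apply/idP/eqP => [H|->] //; apply/val_inj => /=.
by apply/eqP; rewrite eqn_leq H -ltnS ltn_ord.
Qed.

Lemma stdg f : standard_M1 (g f) = Q f.
Proof.
rewrite stdE; have -> : [forall i : 'I_n, g f i <= n'].
  by apply/forallP => i; rewrite ffunE -ltnS ltn_ord.
rewrite /Q /=; apply: eq_forallb => i; apply: eq_forallb => j.
by rewrite !ffunE !maxE.
Qed.

Definition kof (f : {ffun 'I_n -> 'I_n}) := [pick i | f i == ord_max].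

Definition F (k : option 'I_n) (j : 'I_n) : pred 'I_n :=
  if k is Some i then (if j == i then pred1 ord_max else predC1 ord_max)
  else predC1 ord_max.

Lemma Quniq f i j : Q f -> f i == ord_max -> f j == ord_max -> i = j.
Proof.
move=> /forallP Hf fi fj; case: (ltngtP i j) => [lt|lt|eq]; last exact: val_inj.
- by move: (forallP (Hf i) j); rewrite lt fi fj.
- by move: (forallP (Hf j) i); rewrite lt fi fj.
Qed.

Lemma keyE f k : Q f && (kof f == k) = (f \in family (F k)).
Proof.
case: k => [i|].
  apply/andP/familyP => [[Hq /eqP]|H].
    rewrite /kof; case: pickP => // x Hx [<-] j /=.
    case: eqP => [->|ne]; first by rewrite inE.
    by rewrite inE; apply/negP => /eqP/eqP fj; apply: ne; apply: Quniq Hq fj Hx.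
  have Hi : f i == ord_max by move: (H i); rewrite /= eqxx inE.
  have Hu j : f j == ord_max -> j = i.
    by move: (H j) => /=; case: eqP => // _; rewrite inE => /negPf ->.
  split.
    apply/forallP => a; apply/forallP => b; apply/implyP => lab.
    apply/negP => /andP [/Hu ea /Hu eb]; subst; by rewrite ltnn in lab.
  rewrite /kof; case: pickP => [x /Hu -> //|H0]; by rewrite H0 in Hi.
apply/andP/familyP => [[Hq]|H].
  rewrite /kof; case: pickP => // H0 _ j; by rewrite /= inE H0.
split.
  apply/forallP => a; apply/forallP => b; apply/implyP => _.
  by move: (H a); rewrite /= inE => /negPf ->.
rewrite /kof; case: pickP => // x; by move: (H x); rewrite /= inE => /negPf ->.
Qed.

Lemma cardF k : #|family (F k)| = \prod_j #|F k j|.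
Proof.
rewrite card_family /image_mem foldrE big_map.
by rewrite /index_enum enumT.
Qed.

Lemma cardQ : #|Q| = (2 * n - 1) * (n - 1) ^ (n - 1).
Proof.
rewrite -sum1_card (partition_big kof predT) //=.
rewrite (bigD1 None) //= (reindex_omap Some id) //=; last by case.
have E k : \sum_(f in Q | kof f == k) 1 = \prod_j #|F k j|.
  by rewrite -cardF -sum1_card; apply: eq_bigl => f; rewrite -keyE.
rewrite E (eq_bigr (fun j => \prod_j0 #|F (Some j) j0|)); last by move=> j _; rewrite E.
rewrite /F.
have -> : \prod_(j < n) #|predC1 (ord_max : 'I_n)| = n' ^ n.
  by rewrite prod_nat_const card_ord cardC1 card_ord.
have P1 (i : 'I_n) : \prod_j #|if j == i then pred1 (ord_max : 'I_n) else predC1 ord_max| = n' ^ n'.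
  rewrite (bigD1 i) //= eqxx card1 mul1n.
  rewrite (eq_bigr (fun _ => n')); last first.
    by move=> j /negPf ->; rewrite cardC1 card_ord.
  by rewrite prod_nat_const cardC1 card_ord.
under eq_bigr => k _ do rewrite P1.
rewrite (eq_bigl predT) ?sum_nat_const ?card_ord; last by move=> k; rewrite eqxx.
rewrite subSS subn0 expnS; move: (n' ^ n') => x; nia.
Qed.

End S.

Theorem theorem3p2 (n : nat) (hn : 1 <= n) :
  exists s : seq (monomial n),
    [/\ uniq s,
        (forall e : monomial n, (e \in s) = standard_M1 e)
      & size s = (2 * n - 1) * (n - 1) ^ (n - 1)].
Proof.
case: n hn => // n' _.
exists (map (@g n') (enum (@Q n'))); split.
- rewrite map_inj_uniq ?enum_uniq // => f1 f2 H; apply/ffunP => i.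
  by apply/val_inj; move/ffunP: H => /(_ i); rewrite !ffunE.
- move=> e; apply/mapP/idP => [[f hf ->]|H].
    by rewrite stdg; rewrite mem_enum in hf.
  have H' := H; rewrite stdE in H'; have /andP [/forallP B _] := H'.
  have gf : g [ffun i => inord (e i) : 'I_n'.+1] = e.
    by apply/ffunP => i; rewrite !ffunE inordK // ltnS.
  exists [ffun i => inord (e i) : 'I_n'.+1]; last by [].
  rewrite mem_enum; have := stdg [ffun i => inord (e i) : 'I_n'.+1]; rewrite gf H => /esym HQ; exact: HQ.
- by rewrite size_map -cardE cardQ.
Qed.
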